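(* Let $n$ and $m$ be integers with $n\geq 5$ and $m\geq 5$. For each $G\in T_{n,m}$ whose terminals are not true twins, there exists $H\in T_{n,m}$ whose terminals are true twins and which is $3$-stronger than $G$.
   Context: All graphs are finite, simple and undirected. A two-terminal graph is a graph $G$ together with two distinguished vertices $s,t$ (the terminals). $T_{n,m}$ denotes the set of all pairwise nonisomorphic (with isomorphisms preserving the set of terminals) two-terminal graphs with $n$ vertices and $m$ edges. Two vertices $u,v$ are true twins if their closed neighborhoods coincide, $N[u]=N[v]$ (in particular they are adjacent). For a positive integer $d$, a $d$-pathset of a two-terminal graph $G$ is a spanning subgraph of $G$ containing a path of length (number of edges) at most $d$ joining $s$ and $t$; $N_i^d(G)$ is the number of $d$-pathsets of $G$ with exactly $i$ edges. For $G,H\in T_{n,m}$, $H$ is $d$-stronger than $G$ if $N_i^d(H)\geq N_i^d(G)$ for every $i\in\{1,\ldots,m\}$ and $N_j^d(H)>N_j^d(G)$ for some $j\in\{1,\ldots,m\}$. *)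

(* Defs.v *)
From mathcomp Require Import all_boot.
Set Implicit Arguments. Unset Strict Implicit. Unset Printing Implicit Defensive.

(* A simple graph on vertex set 'I_n is given by its edge set: a set of
   2-element subsets of 'I_n. A two-terminal graph is such a graph with two
   distinct distinguished vertices s, t. *)
Definition is_graph (n : nat) (E : {set {set 'I_n}}) : Prop :=
  forall e, e \in E -> #|e| = 2.

Definition adj (n : nat) (E : {set {set 'I_n}}) : rel 'I_n :=
  fun u v => [set u; v] \in E.

Definition closed_nbhd (n : nat) (E : {set {set 'I_n}}) (u : 'I_n) : {set 'I_n} :=
  u |: [set v | adj E u v].

Definition true_twins (n : nat) (E : {set {set 'I_n}}) (u v : 'I_n) : Prop :=
  closed_nbhd E u = closed_nbhd E v.

(* F contains a path of length (number of edges) at most d joining s and t: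
   a sequence of pairwise distinct vertices s = v0, v1, ..., vk = t, k <= d,
   with consecutive vertices adjacent in F (the sequence p = [v1; ...; vk]). *)
Definition has_short_path (n : nat) (d : nat) (F : {set {set 'I_n}}) (s t : 'I_n) : bool :=
  [exists k : 'I_d.+1, exists p : k.-tuple 'I_n,
    [&& path (adj F) s p, uniq (s :: p) & last s p == t]].

(* N_i^d(G): number of d-pathsets (spanning subgraphs, identified with edge
   subsets) of G = (E, s, t) with exactly i edges. *)
Definition Npath (n : nat) (d : nat) (E : {set {set 'I_n}}) (s t : 'I_n) (i : nat) : nat :=
  #|[set F in powerset E | (#|F| == i) && has_short_path d F s t]|.

Definition stronger (n : nat) (d m : nat)
    (E' : {set {set 'I_n}}) (s' t' : 'I_n) (E : {set {set 'I_n}}) (s t : 'I_n) : Prop :=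
  (forall i, 1 <= i <= m -> Npath d E s t i <= Npath d E' s' t' i) /\
  (exists j, 1 <= j <= m /\ Npath d E s t j < Npath d E' s' t' j).

(* Main.v *)
Require Import Defs.
From mathcomp Require Import all_boot zify.
Set Implicit Arguments. Unset Strict Implicit. Unset Printing Implicit Defensive.

Section Main.
Variable n : nat.
Local Notation V := 'I_n.
Local Notation edges := {set {set V}}.
Implicit Types (E F W : edges) (a b c d s t u v x y z w : V) (e f g : {set V}).

Lemma e2C a b : [set a; b] = [set b; a] :> {set V}.
Proof. by rewrite setUC. Qed.

Lemma e2_inj a b c d : [set a; b] = [set c; d] :> {set V} ->
  (a = c /\ b = d) \/ (a = d /\ b = c).
Proof.
move=> H.
have Ha : a \in [set c; d] by rewrite -H set21.
have Hb : b \in [set c; d] by rewrite -H set22.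
have Hc : c \in [set a; b] by rewrite H set21.
have Hd : d \in [set a; b] by rewrite H set22.
move: Ha Hb Hc Hd; rewrite !in_set2.
by case/orP=> /eqP Ha; case/orP=> /eqP Hb; case/orP=> /eqP Hc; case/orP=> /eqP Hd; subst; auto.
Qed.

Lemma adjU g F u v : adj (g |: F) u v = ([set u; v] == g) || adj F u v.
Proof. by rewrite /adj in_setU1. Qed.

Lemma adjC F u v : adj F u v = adj F v u.
Proof. by rewrite /adj e2C. Qed.

Lemma adj1 g u v : adj [set g] u v = ([set u; v] == g).
Proof. by rewrite /adj in_set1. Qed.

Definition P3 F s t : Prop :=
  adj F s t \/ (exists y, adj F s y /\ adj F y t) \/
  (exists y w, [/\ adj F s y, adj F y w & adj F w t]).

Lemma P3C F s t : P3 F s t -> P3 F t s.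
Proof.
case=> [H|[[y [H1 H2]]|[y [w [H1 H2 H3]]]]].
- by left; rewrite adjC.
- by right; left; exists y; rewrite adjC H2 adjC H1.
- by right; right; exists w, y; rewrite adjC H3 adjC H2 adjC H1.
Qed.

Lemma P3_mono F F' s t : F \subset F' -> P3 F s t -> P3 F' s t.
Proof.
move=> /subsetP sub.
have A u v : adj F u v -> adj F' u v by move/sub.
case=> [H|[[y [H1 H2]]|[y [w [H1 H2 H3]]]]].
- by left; apply: A.
- by right; left; exists y; split; apply: A.
- by right; right; exists y, w; split; apply: A.
Qed.

Lemma hsp_P3 F s t : s != t -> has_short_path 3 F s t -> P3 F s t.
Proof.
move=> st /existsP [k /existsP [p /and3P [Hp Hu /eqP Hl]]].
move: k p Hp Hu Hl => [[|[|[|[|k]]]] Hk] //= [[|v1 [|v2 [|v3 [|v4 l]]]] Hsz] //=.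
- by move=> _ _ Hl; rewrite Hl eqxx in st.
- by move=> /andP [H _] _ <-; left.
- by move=> /and3P [H1 H2 _] _ <-; right; left; exists v1.
- by move=> /and4P [H1 H2 H3 _] _ <-; right; right; exists v1, v2.
Qed.

Definition gr F := forall g, g \in F -> #|g| = 2.

Lemma adj_neq F a b : gr F -> adj F a b -> a != b.
Proof. by move=> G H; move: (G _ H); rewrite cards2; case: (a != b). Qed.

Lemma hsp1 F s t : s != t -> adj F s t -> has_short_path 3 F s t.
Proof.
move=> st H; apply/existsP; exists (Ordinal (isT : 1 < 4)); apply/existsP.
exists [tuple t]; by rewrite /= H inE st eqxx.
Qed.

Lemma P3_hsp F s t : s != t -> gr F -> P3 F s t -> has_short_path 3 F s t.
Proof.
move=> st G [H|[[y [H1 H2]]|[y [w [H1 H2 H3]]]]]; first exact: hsp1.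
- apply/existsP; exists (Ordinal (isT : 2 < 4)); apply/existsP.
  exists [tuple y; t].
  by rewrite /= H1 H2 !inE negb_or (adj_neq G H1) (adj_neq G H2) st eqxx.
- case: (eqVneq w s) => [ews|nws].
    by apply: hsp1 => //; rewrite -ews.
  case: (eqVneq y t) => [eyt|nyt].
    by apply: hsp1 => //; rewrite -eyt.
  apply/existsP; exists (Ordinal (isT : 3 < 4)); apply/existsP.
  exists [tuple y; w; t].
  rewrite /= H1 H2 H3 !inE !negb_or (adj_neq G H1) (adj_neq G H2) (adj_neq G H3).
  by rewrite st eq_sym nws nyt eqxx.
Qed.

Lemma gr_sub F F' : gr F' -> F \subset F' -> gr F.
Proof. by move=> G /subsetP sub g /sub /G. Qed.

Lemma hspP E F s t : s != t -> gr E -> F \subset E ->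
  reflect (P3 F s t) (has_short_path 3 F s t).
Proof.
move=> st G sub; apply: (iffP idP); first exact: hsp_P3.
by apply: P3_hsp => //; apply: gr_sub sub.
Qed.


Lemma Npath_sym E s t i : s != t -> gr E -> Npath 3 E s t i = Npath 3 E t s i.
Proof.
move=> st G; rewrite /Npath; apply: eq_card => F; rewrite !inE.
case sub: (F \subset E) => //=; congr (_ && _).
apply/(hspP st G sub)/(hspP _ G sub); first by rewrite eq_sym.
- exact: P3C.
- exact: P3C.
Qed.

Definition swp e f E : edges := f |: (E :\ e).

Lemma swp_gr E e f : gr E -> #|f| = 2 -> gr (swp e f E).
Proof. by move=> G f2 g; rewrite !inE => /orP [/eqP ->|/andP [_ /G]]. Qed.

Lemma swp_card E e f : e \in E -> f \notin E -> #|swp e f E| = #|E|.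
Proof.
move=> eE fE; rewrite /swp cardsU1 (cardsD1 e E) eE !inE negb_and fE orbT.
by rewrite add1n.
Qed.

Section Swap.
Variables (E : edges) (s t : V) (e f : {set V}) (psi : edges -> edges).
Hypotheses (st : s != t) (G : gr E) (eE : e \in E) (fE : f \notin E) (f2 : #|f| = 2).
Hypothesis Hpsi : forall F, F \subset E :\ e -> P3 (e |: F) s t ->
      [/\ psi F \subset E :\ e, #|psi F| = #|F| & P3 (f |: psi F) s t].
Hypothesis Hinj : forall F1 F2, F1 \subset E :\ e -> F2 \subset E :\ e ->
  P3 (e |: F1) s t -> P3 (e |: F2) s t -> psi F1 = psi F2 -> F1 = F2.

Let E' := swp e f E.
Let G' : gr E' := swp_gr G f2.
Let Phi F := if e \in F then f |: psi (F :\ e) else F.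
Let A i := [set F in powerset E | (#|F| == i) && has_short_path 3 F s t].
Let B i := [set F in powerset E' | (#|F| == i) && has_short_path 3 F s t].

Lemma fnotin F : F \subset E :\ e -> f \notin F.
Proof.
move=> /subsetP sub; apply/negP => /sub; rewrite !inE => /andP [_ H].
by move: fE; rewrite H.
Qed.

Lemma A_prop i F : F \in A i -> [/\ F \subset E, #|F| = i & P3 F s t].
Proof.
rewrite !inE => /andP [sub /andP [/eqP <- H]]; split => //.
exact: (hspP st G sub).
Qed.

Lemma Phi_in i : {in A i, forall F, Phi F \in B i}.
Proof.
move=> F /A_prop [sub <- HP]; rewrite /Phi.
have subD : F :\ e \subset E :\ e by apply: setSD.
case eF: (e \in F).
  have HP' : P3 (e |: (F :\ e)) s t by rewrite setD1K.
  case: (Hpsi subD HP') => s1 c1 p1.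
  have sub1 : f |: psi (F :\ e) \subset E'.
    by rewrite /E' /swp; apply: setUS.
  rewrite !inE sub1 /=; apply/andP; split.
    by rewrite cardsU1 (fnotin s1) c1 (cardsD1 e F) eF.
  exact: (P3_hsp st (gr_sub G' sub1)).
have subE : F \subset E' .
  apply: subset_trans (subsetUr _ _); apply/subsetP => g gF.
  by rewrite !inE (subsetP sub _ gF) andbT; apply/eqP => ge; rewrite -ge gF in eF.
rewrite !inE subE eqxx /=; exact: (P3_hsp st (gr_sub G' subE)).
Qed.

Lemma Phi_inj i : {in A i &, injective Phi}.
Proof.
move=> F1 F2 /A_prop [sub1 _ HP1] /A_prop [sub2 _ HP2]; rewrite /Phi.
have subD1 : F1 :\ e \subset E :\ e by apply: setSD.
have subD2 : F2 :\ e \subset E :\ e by apply: setSD.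
case eF1: (e \in F1); case eF2: (e \in F2).
- have HP1' : P3 (e |: (F1 :\ e)) s t by rewrite setD1K.
  have HP2' : P3 (e |: (F2 :\ e)) s t by rewrite setD1K.
  case: (Hpsi subD1 HP1') => s1 _ _; case: (Hpsi subD2 HP2') => s2 _ _.
  move=> H; have: psi (F1 :\ e) = psi (F2 :\ e).
    by rewrite -(setU1K (fnotin s1)) H (setU1K (fnotin s2)).
  move/(Hinj subD1 subD2 HP1' HP2') => H'.
  by rewrite -(setD1K eF1) H' setD1K.
- move=> H; have: f \in F2 by rewrite -H setU11.
  by move/(subsetP sub2) => fE2; move: fE; rewrite fE2.
- move=> H; have: f \in F1 by rewrite H setU11.
  by move/(subsetP sub1) => fE2; move: fE; rewrite fE2.
- by [].
Qed.

Lemma swap_le i : Npath 3 E s t i <= Npath 3 E' s t i.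
Proof.
rewrite /Npath -/(A i) -/(B i) -(card_in_imset (@Phi_inj i)).
apply: subset_leq_card; apply/subsetP => g /imsetP [F FA ->].
exact: Phi_in.
Qed.

Lemma swap_lt W : W \subset E :\ e -> P3 (f |: W) s t ->
  (forall F, F \subset E :\ e -> P3 (e |: F) s t -> psi F <> W) ->
  Npath 3 E s t #|W|.+1 < Npath 3 E' s t #|W|.+1.
Proof.
move=> sW PW Hne.
rewrite /Npath -/(A _) -/(B _) -(card_in_imset (@Phi_inj _)).
apply: proper_card; apply/properP; split.
  apply/subsetP => g /imsetP [F FA ->]; exact: Phi_in.
have subW : f |: W \subset E' by apply: setUS.
exists (f |: W).
  rewrite !inE subW cardsU1 (fnotin sW) eqxx /=.
  exact: (P3_hsp st (gr_sub G' subW)).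
apply/imsetP => [[F /A_prop [sub _ HP]]]; rewrite /Phi.
case eF: (e \in F).
  have subD : F :\ e \subset E :\ e by apply: setSD.
  have HP' : P3 (e |: (F :\ e)) s t by rewrite setD1K.
  case: (Hpsi subD HP') => s1 _ _ H.
  apply: (Hne _ subD HP').
  by rewrite -(setU1K (fnotin s1)) -H (setU1K (fnotin sW)).
move=> H; have: f \in F by rewrite -H setU11.
by move/(subsetP sub) => fE2; move: fE; rewrite fE2.
Qed.

End Swap.


Lemma adjU2P c d F u v : adj ([set c; d] |: F) u v ->
  [\/ u = c /\ v = d, u = d /\ v = c | adj F u v].
Proof.
rewrite adjU => /orP [/eqP /e2_inj [[-> ->]|[-> ->]]|H]; by [constructor | apply: Or32].
Qed.

Lemma adj_sub F E u v : F \subset E -> adj F u v -> adj E u v.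
Proof. by move=> /subsetP sub /sub. Qed.

Lemma adjU_e2 c d F : adj ([set c; d] |: F) c d.
Proof. by rewrite adjU eqxx. Qed.
Lemma adjU_e2' c d F : adj ([set c; d] |: F) d c.
Proof. by rewrite adjU e2C eqxx. Qed.
Lemma adjUr g F u v : adj F u v -> adj (g |: F) u v.
Proof. by rewrite adjU => ->; rewrite orbT. Qed.

Lemma P3U g F s t : P3 F s t -> P3 (g |: F) s t.
Proof. by apply: P3_mono; apply: subsetUr. Qed.

Lemma adj1P c d u v : adj [set [set c; d]] u v ->
  (u = c /\ v = d) \/ (u = d /\ v = c).
Proof. by rewrite adj1 => /eqP /e2_inj. Qed.

Ltac cl := try (match goal with
  | H : is_true (negb (?a == ?a)) |- _ => by rewrite eqxx in H
  | H : is_true (negb ([set ?a; ?b] == [set ?b; ?a])) |- _ => by rewrite e2C eqxx in H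
  | H : is_true ?b, H' : is_true (negb ?b) |- _ => by rewrite H in H'
  | H : is_true (adj (_ :\ [set ?u; ?v]) ?u ?v) |- _ => by move: H; rewrite /adj !inE eqxx
  | H : is_true (adj (_ :\ [set ?u; ?v]) ?v ?u) |- _ => by move: H; rewrite /adj !inE e2C eqxx
  end).
Ltac dec1 H := case/adj1P: H => [[? ?]|[? ?]]; subst; cl.
Ltac dec H := case/adjU2P: H => [[? ?]|[? ?]|H]; subst; cl.

Lemma moveA_imp E F s t x z : x != s -> x != t -> z != s -> z != t ->
  ~~ adj E t x -> F \subset E ->
  P3 ([set x; z] |: F) s t -> P3 ([set t; x] |: F) s t.
Proof.
move=> xs xt zs zt ntx sub.
case=> [H|[[y [H1 H2]]|[y [w [H1 H2 H3]]]]].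
- by dec H; left; apply: adjUr.
- dec H1; dec H2; apply: P3U; right; left; exists y; done.
- dec H1; dec H3; dec H2.
  + right; left; exists x; split; [exact: adjUr | exact: adjU_e2'].
  + by move: ntx; rewrite adjC (adj_sub sub H3).
  + apply: P3U; right; right; exists y, w; done.
Qed.


Lemma spoke_useless E F s t y : s != t -> y != s -> y != t -> ~~ adj E t y ->
  (forall v, adj E y v -> v = s \/ v = t) -> gr E -> F \subset E :\ [set s; y] ->
  P3 ([set s; y] |: F) s t -> P3 F s t.
Proof.
move=> st ys yt nty ny G sub.
have subE : F \subset E by apply: subset_trans sub (subsetDl _ _).
have GF : gr F := gr_sub G subE.
case=> [H|[[x [H1 H2]]|[x [w [H1 H2 H3]]]]].
- by dec H; left.
- dec H1; dec H2.
  + by move: nty; rewrite adjC (adj_sub subE H2).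
  + by right; left; exists x.
- dec H1.
  + dec H2.
    * by dec H3; left.
    * case: (ny _ (adj_sub subE H2)) => ?; subst.
        by dec H3; left.
      by move: nty; rewrite adjC (adj_sub subE H2).
  + dec H2.
    * by move: (adj_neq GF H1); rewrite eqxx.
    * by move: (subsetP sub _ H1); rewrite !inE eqxx.
    * by dec H3; right; right; exists x, w.
Qed.

Lemma internal_cases F s t a b : a != s -> a != t -> b != s -> b != t ->
  P3 ([set a; b] |: F) s t ->
  [\/ P3 F s t, adj F s a /\ adj F b t | adj F s b /\ adj F a t].
Proof.
move=> a_s a_t b_s b_t.
case=> [H|[[x [H1 H2]]|[x [w [H1 H2 H3]]]]].
- by dec H; constructor; left.
- by dec H1; dec H2; constructor; right; left; exists x.
- dec H1; dec H3; dec H2; [apply: Or32 | apply: Or33 | constructor].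
  + by [].
  + by [].
  + by right; right; exists x, w.
Qed.

Lemma internal_useless E F s t a b : a != s -> a != t -> b != s -> b != t ->
  ~~ (adj E s a && adj E b t) -> ~~ (adj E s b && adj E a t) -> F \subset E ->
  P3 ([set a; b] |: F) s t -> P3 F s t.
Proof.
move=> a_s a_t b_s b_t N1 N2 sub /internal_cases [] // [H1 H2].
- by move: N1; rewrite (adj_sub sub H1) (adj_sub sub H2).
- by move: N2; rewrite (adj_sub sub H1) (adj_sub sub H2).
Qed.

Lemma P3_single s t a b : s != t -> P3 [set [set a; b]] s t -> [set a; b] = [set s; t].
Proof.
move=> st.
case=> [H|[[x [H1 H2]]|[x [w [H1 H2 H3]]]]].
- by dec1 H; rewrite e2C.
- by dec1 H1; dec1 H2.
- by dec1 H1; dec1 H3; rewrite e2C.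
Qed.

Lemma notP3_pair E s t x a b : s != t -> x != s -> x != t ->
  [set a; b] \in E -> [set a; b] != [set s; t] -> ~~ adj E t x ->
  ~ P3 ([set a; b] |: [set [set s; x]]) s t.
Proof.
move=> st xs xt gE gst ntx.
case=> [H|[[y [H1 H2]]|[y [w [H1 H2 H3]]]]].
- by dec H; dec1 H.
- dec H2; dec H1; try dec1 H1; try dec1 H2.
  + by move: ntx; rewrite /adj e2C gE.
  + by move: ntx; rewrite /adj gE.
- dec H3; dec H1; try dec1 H1; try dec1 H3; dec H2; try dec1 H2.
  all: try by move: ntx; rewrite /adj ?e2C gE.
Qed.


Definition SWh E s t x a b : Prop :=
  s != t /\ gr E /\ x != s /\ x != t /\ adj E s x /\ ~~ adj E t x /\
  (forall v, adj E x v -> v = s) /\ a != s /\ a != t /\ b != s /\ b != t /\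
  x != a /\ x != b.

Definition Q s t x a b F :=
  [&& adj F s a, adj F b t, ~~ adj F s x & ~~ has_short_path 3 F s t].
Definition img s t x b F := [set s; x] |: (F :\ [set b; t]).

Ltac swh H := case: H => [st [G [xs [xt [sx [ntx [nx [a_s [a_t [b_s [b_t [xa xb]]]]]]]]]]]].

Lemma adjD F b t u v : adj (F :\ [set b; t]) u v -> adj F u v.
Proof. by apply: adj_sub; apply: subsetDl. Qed.

Lemma Q_notP3 E s t x a b F : SWh E s t x a b -> F \subset E :\ [set a; b] ->
  Q s t x a b F -> ~ P3 F s t.
Proof.
move=> H sub HQ; swh H.
have subE : F \subset E := subset_trans sub (subsetDl _ _).
by case/and4P: HQ => _ _ _ /negP H HP; apply: H; apply: (P3_hsp st (gr_sub G subE)).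
Qed.

Lemma img_sub E s t x a b F : SWh E s t x a b -> F \subset E :\ [set a; b] ->
  Q s t x a b F -> img s t x b F \subset E :\ [set a; b].
Proof.
move=> H sub HQ; swh H.
rewrite /img subUset sub1set !inE (sx : [set s; x] \in E) andbT; apply/andP; split.
  apply/eqP => /e2_inj [[? ?]|[? ?]]; subst; cl.
by apply: subset_trans sub; apply: subsetDl.
Qed.

Lemma img_card s t x a b F : Q s t x a b F -> #|img s t x b F| = #|F|.
Proof.
case/and4P => _ Hbt Hsx _.
rewrite /img cardsU1 (cardsD1 [set b; t] F) (Hbt : [set b; t] \in F) !inE negb_and.
by move: Hsx; rewrite /adj => ->; rewrite orbT.
Qed.

Lemma img_P3 s t x b F : P3 ([set t; x] |: img s t x b F) s t.
Proof.
right; left; exists x; split.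
  by apply: adjUr; rewrite /img adjU eqxx.
exact: adjU_e2'.
Qed.

Ltac unD := repeat match goal with H : is_true (adj (_ :\ _) _ _) |- _ => move/adjD: H => H end.
Ltac p3 := solve [left; assumption | right; left; eexists; split; eassumption |
   right; right; do 2 eexists; split; eassumption].

Lemma img_notP3 E s t x a b F : SWh E s t x a b -> F \subset E :\ [set a; b] ->
  Q s t x a b F -> ~ P3 ([set a; b] |: img s t x b F) s t.
Proof.
move=> H0 sub HQ.
have NP := Q_notP3 H0 sub HQ; swh H0.
have subE : F \subset E := subset_trans sub (subsetDl _ _).
have GF : gr F := gr_sub G subE.
have ntxF : ~~ adj F x t by apply: contra ntx; rewrite adjC; apply: adj_sub.
case/and4P: HQ => Hsa Hbt Hsx _.
rewrite /img.
case=> [H|[[y [H1 H2]]|[y [w [H1 H2 H3]]]]].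
  by dec H; dec H; apply: NP; left; exact: adjD H.
  dec H1; dec H1; dec H2; dec H2; unD; cl; apply: NP; p3.
dec H1; dec H1; dec H3; dec H3; dec H2; try dec H2; unD; cl; try (apply: NP; p3).
all: try (match goal with N : forall v, is_true (adj _ ?x' v) -> v = _, H : is_true (adj _ ?x' ?w) |- _ => have ? := N _ (adj_sub subE H) end; subst; apply: NP; p3).
Qed.

Lemma img_sa E s t x a b F : SWh E s t x a b -> Q s t x a b F -> adj (img s t x b F) s a.
Proof.
move=> H HQ; swh H.
case/and4P: HQ => Hsa _ _ _.
rewrite /img; apply: adjUr; rewrite /adj !inE.
rewrite (Hsa : [set s; a] \in F) andbT; apply/eqP => /e2_inj [[? ?]|[? ?]]; subst; cl.
Qed.

Lemma img_nsb E s t x a b F : SWh E s t x a b -> F \subset E :\ [set a; b] ->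
  Q s t x a b F -> ~~ adj (img s t x b F) s b.
Proof.
move=> H0 sub HQ.
have NP := Q_notP3 H0 sub HQ; swh H0.
case/and4P: HQ => _ Hbt _ _.
apply/negP; rewrite /img => H; dec H; unD.
by apply: NP; right; left; exists b.
Qed.



Lemma img_recover s t x a b F : Q s t x a b F ->
  F = [set b; t] |: (img s t x b F :\ [set s; x]).
Proof.
case/and4P => _ Hbt Hsx _.
rewrite /img setU1K ?setD1K //.
by rewrite !inE negb_and; move: Hsx; rewrite /adj => ->; rewrite orbT.
Qed.

Lemma P3_tx F s t x : adj F s x -> P3 ([set t; x] |: F) s t.
Proof. by move=> H; right; left; exists x; split; [apply: adjUr | apply: adjU_e2']. Qed.

Lemma SW_move E s t x c1 c2 : s != t -> gr E -> x != s -> x != t -> adj E s x ->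
  ~~ adj E t x -> (forall v, adj E x v -> v = s) ->
  c1 != s -> c1 != t -> c2 != s -> c2 != t ->
  adj E s c1 -> adj E c1 t -> adj E s c2 -> adj E c2 t -> adj E c1 c2 ->
  (forall i, Npath 3 E s t i <= Npath 3 (swp [set c1; c2] [set t; x] E) s t i) /\
  Npath 3 E s t 2 < Npath 3 (swp [set c1; c2] [set t; x] E) s t 2.
Proof.
move=> st G xs xt sx ntx nx c1s c1t c2s c2t s1 t1 s2 t2 c12.
have xc1 : x != c1 by apply: contraNneq ntx => ->; rewrite adjC.
have xc2 : x != c2 by apply: contraNneq ntx => ->; rewrite adjC.
have H12 : SWh E s t x c1 c2 by do 12 (split => //).
have H21 : SWh E s t x c2 c1 by do 12 (split => //).
have eE : [set c1; c2] \in E := c12.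
have fE : [set t; x] \notin E := ntx.
have f2 : #|[set t; x]| = 2 by rewrite cards2 eq_sym xt.
pose psi F := if Q s t x c1 c2 F then img s t x c2 F
              else if Q s t x c2 c1 F then img s t x c1 F else F.
have e21 : [set c2; c1] = [set c1; c2] := e2C _ _.
have Hpsi : forall F, F \subset E :\ [set c1; c2] -> P3 ([set c1; c2] |: F) s t ->
    [/\ psi F \subset E :\ [set c1; c2], #|psi F| = #|F| & P3 ([set t; x] |: psi F) s t].
  move=> F sub HP; rewrite /psi.
  case q12: (Q s t x c1 c2 F).
    by split; [apply: img_sub H12 sub q12 | apply: img_card q12 | apply: img_P3].
  have sub' : F \subset E :\ [set c2; c1] by rewrite e21.
  case q21: (Q s t x c2 c1 F).
    by split; [rewrite -e21; apply: img_sub H21 sub' q21 | apply: img_card q21 | apply: img_P3].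
  split => //.
  have subE : F \subset E := subset_trans sub (subsetDl _ _).
  case: (boolP (has_short_path 3 F s t)) => [/(hspP st G subE) HF|nH]; first exact: P3U.
  case: (boolP (adj F s x)) => [Hsx|nsx]; first exact: P3_tx.
  case/internal_cases: HP => // [HF|[Ha Hb]|[Ha Hb]].
  - by case/negP: nH; apply: (P3_hsp st (gr_sub G subE)).
  - by move: q12; rewrite /Q Ha Hb nsx nH.
  - by move: q21; rewrite /Q Ha Hb nsx nH.
have Hdom : forall F, F \subset E :\ [set c1; c2] -> P3 ([set c1; c2] |: F) s t ->
    ~~ Q s t x c1 c2 F -> ~~ Q s t x c2 c1 F -> psi F = F.
  by move=> F _ _ /negbTE q12 /negbTE q21; rewrite /psi q12 q21.
have Hinj : forall F1 F2, F1 \subset E :\ [set c1; c2] -> F2 \subset E :\ [set c1; c2] ->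
    P3 ([set c1; c2] |: F1) s t -> P3 ([set c1; c2] |: F2) s t -> psi F1 = psi F2 -> F1 = F2.
  move=> F1 F2 sub1 sub2 HP1 HP2.
  have sub1' : F1 \subset E :\ [set c2; c1] by rewrite e21.
  have sub2' : F2 \subset E :\ [set c2; c1] by rewrite e21.
  rewrite /psi.
  case q1: (Q s t x c1 c2 F1); case q2: (Q s t x c1 c2 F2).
  - by move=> H; rewrite (img_recover q1) H -(img_recover q2).
  - case r2: (Q s t x c2 c1 F2) => H.
      by move: (img_sa H12 q1); rewrite H; move: (img_nsb H21 sub2' r2) => /negbTE ->.
    by case: (img_notP3 H12 sub1 q1); rewrite H.
  - case r1: (Q s t x c2 c1 F1) => H.
      by move: (img_sa H12 q2); rewrite -H; move: (img_nsb H21 sub1' r1) => /negbTE ->.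
    by case: (img_notP3 H12 sub2 q2); rewrite -H.
  case r1: (Q s t x c2 c1 F1); case r2: (Q s t x c2 c1 F2).
  - by move=> H; rewrite (img_recover r1) H -(img_recover r2).
  - by move=> H; case: (img_notP3 H21 sub1' r1); rewrite e21 H.
  - by move=> H; case: (img_notP3 H21 sub2' r2); rewrite e21 -H.
  - by [].
split.
  move=> i; exact: (swap_le st G fE f2 Hpsi Hinj).
have sW : [set [set s; x]] \subset E :\ [set c1; c2].
  rewrite sub1set !inE (sx : [set s; x] \in E) andbT.
  by apply/eqP => /e2_inj [[? ?]|[? ?]]; subst; cl.
have := (swap_lt st G fE f2 Hpsi Hinj sW); rewrite cards1; apply.
  by apply: P3_tx; rewrite adj1 eqxx.
move=> F sub HP; rewrite /psi.
case q12: (Q s t x c1 c2 F) => [|].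
  move=> H; move: (img_sa H12 q12); rewrite H adj1 => /eqP /e2_inj [[? ?]|[? ?]]; subst; cl.
case q21: (Q s t x c2 c1 F) => [|].
  move=> H; move: (img_sa H21 q21); rewrite H adj1 => /eqP /e2_inj [[? ?]|[? ?]]; subst; cl.
move=> H; apply: (@notP3_pair E s t x c1 c2) => //; last by rewrite -H.
by apply/eqP => /e2_inj [[? ?]|[? ?]]; subst; cl.
Qed.


Ltac neq2 := apply/eqP => /e2_inj [[? ?]|[? ?]]; subst; cl.

Lemma id_move E s t e f : s != t -> gr E -> f \notin E -> #|f| = 2 ->
  (forall F, F \subset E :\ e -> P3 (e |: F) s t -> P3 (f |: F) s t) ->
  forall i, Npath 3 E s t i <= Npath 3 (swp e f E) s t i.
Proof.
move=> st G fE f2 H.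
apply: (@swap_le E s t e f id st G fE f2) => //.
by move=> F sub HP; split => //; apply: H.
Qed.

Lemma id_move_lt E s t e f W : s != t -> gr E -> f \notin E -> #|f| = 2 ->
  (forall F, F \subset E :\ e -> P3 (e |: F) s t -> P3 (f |: F) s t) ->
  W \subset E :\ e -> P3 (f |: W) s t -> ~ P3 (e |: W) s t ->
  Npath 3 E s t #|W|.+1 < Npath 3 (swp e f E) s t #|W|.+1.
Proof.
move=> st G fE f2 H sW P1 P2.
apply: (@swap_lt E s t e f id st G fE f2) => //.
- by move=> F sub HP; split => //; apply: H.
- by move=> F _ HP HW; apply: P2; rewrite -HW.
Qed.

Definition single E s t x := [&& x != s, x != t & adj E s x != adj E t x].
Definition sing E s t := #|[set x | single E s t x]|.

Lemma single_sym E s t x : single E s t x = single E t s x.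
Proof. by rewrite /single; case: (x != s); case: (x != t) => //=; rewrite eq_sym. Qed.

Lemma sing_sym E s t : sing E s t = sing E t s.
Proof. by apply: eq_card => x; rewrite !inE single_sym. Qed.

Lemma twin_nosingle E s t : adj E s t -> (forall x, ~~ single E s t x) -> true_twins E s t.
Proof.
move=> Hst Hn; rewrite /true_twins /closed_nbhd; apply/setP => v; rewrite !inE.
case: (eqVneq v s) => [->|vs] /=.
  by rewrite adjC Hst orbT.
case: (eqVneq v t) => [->|vt] /=.
  by rewrite Hst.
by move: (Hn v); rewrite /single vs vt /= negbK => /eqP.
Qed.

Lemma single_exists E s t : adj E s t -> ~ true_twins E s t -> exists x, single E s t x.
Proof.
move=> Hst Hnt; case: (pickP (single E s t)) => [x Hx|H]; first by exists x.
by case: Hnt; apply: twin_nosingle => // x; rewrite H.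
Qed.

Lemma sing_dec E E1 s t x : single E s t x -> ~~ single E1 s t x ->
  (forall y, y != x -> single E1 s t y = single E s t y) -> sing E1 s t < sing E s t.
Proof.
move=> Sx NSx Hy; apply: proper_card; apply/properP; split.
  apply/subsetP => y; rewrite !inE => Sy.
  case: (eqVneq y x) => [eyx|nyx]; first by move: NSx; rewrite -eyx Sy.
  by rewrite -Hy.
by exists x; rewrite !inE.
Qed.

Lemma adj_swp E e f u v : adj (swp e f E) u v = ([set u; v] == f) || ([set u; v] != e) && adj E u v.
Proof. by rewrite /swp /adj !inE. Qed.

Lemma adj_swp_o E e f u v : [set u; v] != e -> [set u; v] != f -> adj (swp e f E) u v = adj E u v.
Proof. by move=> H1 /negbTE H2; rewrite adj_swp H1 H2. Qed.

Lemma swp_info E e f : gr E -> e \in E -> f \notin E -> #|f| = 2 ->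
  gr (swp e f E) /\ #|swp e f E| = #|E|.
Proof. by move=> G eE fE f2; split; [apply: swp_gr | apply: swp_card]. Qed.

Lemma stepA E s t x z : s != t -> gr E -> adj E s t -> x != s -> x != t -> z != s -> z != t ->
  adj E s x -> ~~ adj E t x -> adj E x z ->
  [/\ gr (swp [set x; z] [set t; x] E), #|swp [set x; z] [set t; x] E| = #|E|,
      adj (swp [set x; z] [set t; x] E) s t,
      sing (swp [set x; z] [set t; x] E) s t < sing E s t &
      (forall i, Npath 3 E s t i <= Npath 3 (swp [set x; z] [set t; x] E) s t i) /\
      Npath 3 E s t 2 < Npath 3 (swp [set x; z] [set t; x] E) s t 2].
Proof.
move=> st G Hst xs xt zs zt sx ntx xz.
have f2 : #|[set t; x]| = 2 by rewrite cards2 eq_sym xt.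
have fE : [set t; x] \notin E := ntx.
have [G1 C1] := swp_info G xz fE f2.
have Himp : forall F, F \subset E :\ [set x; z] -> P3 ([set x; z] |: F) s t -> P3 ([set t; x] |: F) s t.
  move=> F sub; apply: (moveA_imp xs xt zs zt ntx).
  exact: subset_trans sub (subsetDl _ _).
split => //.
- by rewrite adj_swp_o //; neq2.
- apply: (@sing_dec _ _ _ _ x).
  + by rewrite /single xs xt sx (negbTE ntx).
  + rewrite /single xs xt /= (@adj_swp _ _ _ t x) eqxx adj_swp_o ?sx //; neq2.
  + move=> y yx; rewrite /single !adj_swp_o //; neq2.
split; first exact: id_move.
- have sW : [set [set s; x]] \subset E :\ [set x; z].
    by rewrite sub1set !inE (sx : [set s; x] \in E) andbT; neq2.
  have := id_move_lt st G fE f2 Himp sW; rewrite cards1; apply.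
    by apply: P3_tx; rewrite adj1 eqxx.
  apply: (@notP3_pair E) => //; neq2.
Qed.


Lemma stepC E s t x z : s != t -> gr E -> adj E s t -> x != s -> x != t -> z != s -> z != t ->
  z != x -> adj E s x -> ~~ adj E t x -> (forall v, adj E x v -> v = s) ->
  [/\ gr (swp [set s; x] [set x; z] E), #|swp [set s; x] [set x; z] E| = #|E|,
      adj (swp [set s; x] [set x; z] E) s t,
      sing (swp [set s; x] [set x; z] E) s t < sing E s t &
      (forall i, Npath 3 E s t i <= Npath 3 (swp [set s; x] [set x; z] E) s t i)].
Proof.
move=> st G Hst xs xt zs zt zx sx ntx nx.
have f2 : #|[set x; z]| = 2 by rewrite cards2 eq_sym zx.
have fE : [set x; z] \notin E.
  by apply/negP => /nx zs'; move: zs; rewrite zs' eqxx.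
have [G1 C1] := swp_info G sx fE f2.
have nx' : forall v, adj E x v -> v = s \/ v = t by move=> v /nx ->; left.
split => //.
- by rewrite adj_swp_o //; neq2.
- apply: (@sing_dec _ _ _ _ x).
  + by rewrite /single xs xt sx (negbTE ntx).
  + have a1 : adj (swp [set s; x] [set x; z] E) s x = false.
      by rewrite adj_swp eqxx /= orbF; apply/negbTE; neq2.
    have a2 : adj (swp [set s; x] [set x; z] E) t x = false.
      by rewrite adj_swp_o ?(negbTE ntx) //; neq2.
    by rewrite /single a1 a2 !andbF.
  + move=> y yx; rewrite /single !adj_swp_o //; neq2.
- apply: id_move => // F sub HP; apply: P3U.
  exact: (spoke_useless st xs xt ntx nx' G sub HP).
Qed.

Lemma one_step E s t x : s != t -> gr E -> adj E s t -> x != s -> x != t ->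
  adj E s x -> ~~ adj E t x -> (exists z, [&& z != s, z != t & z != x]) ->
  exists E1, [/\ gr E1, #|E1| = #|E|, adj E1 s t, sing E1 s t < sing E s t &
      (forall i, Npath 3 E s t i <= Npath 3 E1 s t i)].
Proof.
move=> st G Hst xs xt sx ntx [z0 /and3P [z0s z0t z0x]].
case: (pickP (fun z => [&& z != s, z != t & adj E x z])) => [z /and3P [zs zt xz]|none].
  have [G1 C1 A1 S1 [L1 _]] := stepA st G Hst xs xt zs zt sx ntx xz.
  by exists (swp [set x; z] [set t; x] E); split.
have nx : forall v, adj E x v -> v = s.
  move=> v xv; case: (eqVneq v s) => // vs; case: (eqVneq v t) => [evt|vt].
    by move: ntx; rewrite adjC -evt xv.
  by move: (none v); rewrite vs vt xv.
have [G1 C1 A1 S1 L1] := stepC st G Hst xs xt z0s z0t z0x sx ntx nx.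
by exists (swp [set s; x] [set x; z0] E); split.
Qed.

Lemma iter k : forall E s t, sing E s t <= k -> s != t -> gr E -> adj E s t ->
  (forall x, exists z, [&& z != s, z != t & z != x]) ->
  exists E', [/\ gr E', #|E'| = #|E|, true_twins E' s t &
     forall i, Npath 3 E s t i <= Npath 3 E' s t i].
Proof.
elim: k => [|k IH] E s t Hk st G Hst Hz.
  exists E; split => //; apply: twin_nosingle => // x.
  apply/negP => Sx; have : 0 < sing E s t by apply/card_gt0P; exists x; rewrite inE.
  by rewrite ltnNge Hk.
case: (pickP (single E s t)) => [x Sx|none]; last first.
  by exists E; split => //; apply: twin_nosingle => // x; rewrite none.
move: (Sx); rewrite /single => /and3P [xs xt dx].
have [E1 [G1 C1 A1 S1 L1]] : exists E1, [/\ gr E1, #|E1| = #|E|, adj E1 s t,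
    sing E1 s t < sing E s t & (forall i, Npath 3 E s t i <= Npath 3 E1 s t i)].
  have [z /and3P [zs zt zx]] := Hz x.
  case sx: (adj E s x).
    have ntx : ~~ adj E t x by move: dx; rewrite sx; case: (adj E t x).
    by apply: (one_step st G Hst xs xt sx ntx); exists z; rewrite zs zt zx.
  have tx : adj E t x by move: dx; rewrite sx; case: (adj E t x).
  have ts : t != s by rewrite eq_sym.
  have Hts : adj E t s by rewrite adjC.
  have [E1 [G1 C1 A1 S1 L1]] := one_step ts G Hts xt xs tx (negbT sx)
     (ex_intro _ z (introT and3P (And3 zt zs zx))).
  exists E1; split => //.
  - by rewrite adjC.
  - by rewrite sing_sym (sing_sym E).
  - by move=> i; rewrite (Npath_sym _ st G) (Npath_sym _ st G1).
have Hk1 : sing E1 s t <= k by rewrite -ltnS (leq_trans S1 Hk).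
have [E' [G' C' T' L']] := IH E1 s t Hk1 st G1 A1 Hz.
exists E'; split => //; first by rewrite C'.
by move=> i; apply: leq_trans (L1 i) (L' i).
Qed.


Lemma card4 (g1 g2 g3 g4 : {set V}) : #|[set g1; g2; g3; g4]| <= 4.
Proof.
apply: leq_trans (leq_card_setU _ _).1 _; rewrite cards1 addn1 ltnS.
apply: leq_trans (leq_card_setU _ _).1 _; rewrite cards1 addn1 ltnS.
by apply: leq_trans (leq_card_setU _ _).1 _; rewrite !cards1.
Qed.

Definition strictly E E1 s t :=
  (forall i, Npath 3 E s t i <= Npath 3 E1 s t i) /\
  exists j, 0 < j <= #|E| /\ Npath 3 E s t j < Npath 3 E1 s t j.

Lemma step_u E s t x a b : s != t -> gr E -> 5 <= #|E| -> adj E s t -> x != s -> x != t ->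
  adj E s x -> ~~ adj E t x -> adj E a b -> [set a; b] != [set s; t] ->
  [set a; b] != [set s; x] ->
  (forall F, F \subset E :\ [set a; b] -> P3 ([set a; b] |: F) s t -> P3 F s t) ->
  exists E1, [/\ gr E1, #|E1| = #|E|, adj E1 s t & strictly E E1 s t].
Proof.
move=> st G c5 Hst xs xt sx ntx ab nst nsx U.
have f2 : #|[set t; x]| = 2 by rewrite cards2 eq_sym xt.
have fE : [set t; x] \notin E := ntx.
have [G1 C1] := swp_info G ab fE f2.
have Himp : forall F, F \subset E :\ [set a; b] -> P3 ([set a; b] |: F) s t ->
    P3 ([set t; x] |: F) s t by move=> F sub HP; apply: P3U; apply: U.
exists (swp [set a; b] [set t; x] E); split => //.
  by rewrite adj_swp_o //; neq2.
split; first exact: id_move.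
exists 2; split; first by apply: leq_trans c5.
have sW : [set [set s; x]] \subset E :\ [set a; b].
  by rewrite sub1set !inE (sx : [set s; x] \in E) andbT eq_sym.
have := id_move_lt st G fE f2 Himp sW; rewrite cards1; apply.
  by apply: P3_tx; rewrite adj1 eqxx.
exact: (@notP3_pair E).
Qed.

Lemma notP3_triple s t x c1 c2 : s != t -> x != s -> x != t -> c1 != s -> c1 != t ->
  c2 != s -> c2 != t -> c1 != c2 -> x != c1 -> x != c2 ->
  ~ P3 ([set s; x] |: ([set s; c1] |: [set [set c2; t]])) s t.
Proof.
move=> st xs xt c1s c1t c2s c2t c12 xc1 xc2.
case=> [H|[[y [H1 H2]]|[y [w [H1 H2 H3]]]]].
- by dec H; dec H; dec1 H.
- by dec H2; try dec H2; try dec1 H2; dec H1; try dec H1; try dec1 H1.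
- dec H3; try dec H3; try dec1 H3; dec H1; try dec H1; try dec1 H1;
    dec H2; try dec H2; try dec1 H2.
Qed.

Lemma step_d E s t x c1 c2 : s != t -> gr E -> 5 <= #|E| -> adj E s t -> x != s -> x != t ->
  adj E s x -> ~~ adj E t x -> (forall v, adj E x v -> v = s) ->
  c1 != s -> c1 != t -> c2 != s -> c2 != t -> c1 != c2 ->
  adj E s c1 -> adj E c2 t -> adj E c1 t -> ~~ adj E c1 c2 ->
  exists E1, [/\ gr E1, #|E1| = #|E|, adj E1 s t & strictly E E1 s t].
Proof.
move=> st G c5 Hst xs xt sx ntx nx c1s c1t c2s c2t c12 s1 t2 t1 n12.
have xc1 : x != c1 by apply: contraNneq ntx => ->; rewrite adjC.
have xc2 : x != c2 by apply: contraNneq ntx => ->; rewrite adjC t2.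
have f2 : #|[set c1; c2]| = 2 by rewrite cards2 c12.
have fE : [set c1; c2] \notin E := n12.
have [G1 C1] := swp_info G sx fE f2.
have nx' : forall v, adj E x v -> v = s \/ v = t by move=> v /nx ->; left.
have Himp : forall F, F \subset E :\ [set s; x] -> P3 ([set s; x] |: F) s t ->
    P3 ([set c1; c2] |: F) s t.
  by move=> F sub HP; apply: P3U; apply: (spoke_useless st xs xt ntx nx' G sub HP).
exists (swp [set s; x] [set c1; c2] E); split => //.
  by rewrite adj_swp_o //; neq2.
split; first exact: id_move.
have W2 : #|[set s; c1] |: [set [set c2; t]]| = 2.
  have N : [set s; c1] != [set c2; t] by neq2.
  by rewrite cardsU1 cards1 in_set1 N.
exists 3; split; first by apply: leq_trans c5.
have sW : [set s; c1] |: [set [set c2; t]] \subset E :\ [set s; x].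
  rewrite subUset !sub1set !inE (s1 : [set s; c1] \in E) (t2 : [set c2; t] \in E) !andbT.
  by apply/andP; split; neq2.
have := id_move_lt st G fE f2 Himp sW; rewrite W2; apply.
  right; right; exists c1, c2; split.
  - by apply: adjUr; rewrite adjU eqxx.
  - by rewrite adjU eqxx.
  - by apply: adjUr; rewrite adjU adj1 eqxx orbT.
exact: notP3_triple.
Qed.


Lemma strictly_sym E E1 s t : s != t -> gr E -> gr E1 -> strictly E E1 t s -> strictly E E1 s t.
Proof.
move=> st G G1 [L [j [Hj Lj]]]; split.
  by move=> i; rewrite (Npath_sym _ st G) (Npath_sym _ st G1).
by exists j; split => //; rewrite (Npath_sym _ st G) (Npath_sym _ st G1).
Qed.

Lemma strict_noout E s t x : s != t -> gr E -> 5 <= #|E| -> adj E s t -> x != s -> x != t ->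
  adj E s x -> ~~ adj E t x ->
  (forall y z, single E s t y -> z != s -> z != t -> ~~ adj E y z) ->
  exists E1, [/\ gr E1, #|E1| = #|E|, adj E1 s t & strictly E E1 s t].
Proof.
move=> st G c5 Hst xs xt sx ntx Hno.
have Sx : single E s t x by rewrite /single xs xt sx (negbTE ntx).
have nx : forall v, adj E x v -> v = s.
  move=> v xv; case: (eqVneq v s) => // vs; case: (eqVneq v t) => [evt|vt].
    by move: ntx; rewrite adjC -evt xv.
  by move: (Hno x v Sx vs vt); rewrite xv.
have ny : forall y, single E s t y -> forall v, adj E y v -> v = s \/ v = t.
  move=> y Sy v yv; case: (eqVneq v s) => [->|vs]; first by left.
  case: (eqVneq v t) => [->|vt]; first by right.
  by move: (Hno y v Sy vs vt); rewrite yv.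
pose dbl c := [&& c != s, c != t, adj E s c & adj E c t].
case: (pickP (fun p : V * V => [&& dbl p.1, dbl p.2 & adj E p.1 p.2])) =>
    [[c1 c2] /= /and3P [/and4P [c1s c1t s1 t1] /and4P [c2s c2t s2 t2] a12] | noa].
  have [L S] := SW_move st G xs xt sx ntx nx c1s c1t c2s c2t s1 t1 s2 t2 a12.
  have f2 : #|[set t; x]| = 2 by rewrite cards2 eq_sym xt.
  have [G1 C1] := swp_info G a12 (ntx : [set t; x] \notin E) f2.
  exists (swp [set c1; c2] [set t; x] E); split => //.
    by rewrite adj_swp_o //; neq2.
  by split => //; exists 2; split => //; apply: leq_trans c5.
case: (pickP (fun y => single E s t y && (y != x))) => [y /andP [Sy yx]| nob].
  move: (Sy); rewrite /single => /and3P [ys yt dy].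
  case sy: (adj E s y).
    have nty : ~~ adj E t y by move: dy; rewrite sy; case: (adj E t y).
    apply: (step_u st G c5 Hst xs xt sx ntx sy); try neq2.
    by move=> F sub HP; apply: (spoke_useless st ys yt nty (ny y Sy) G sub HP).
  have ty : adj E t y by move: dy; rewrite sy; case: (adj E t y).
  apply: (step_u st G c5 Hst xs xt sx ntx ty); try neq2.
  move=> F sub HP; apply: P3C.
  have ts : t != s by rewrite eq_sym.
  have ny' : forall v, adj E y v -> v = t \/ v = s by move=> v /(ny y Sy) [] ->; auto.
  exact: (spoke_useless ts yt ys (negbT sy) ny' G sub (P3C HP)).
case: (pickP (fun p : V * V => [&& p.1 != s, p.1 != t, p.2 != s, p.2 != t & adj E p.1 p.2])) =>
    [[a b] /= /and5P [a_s a_t b_s b_t ab] | noc].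
  have Na : forall a b, a != s -> a != t -> b != s -> b != t -> adj E a b ->
      ~~ (adj E s a && adj E b t).
    move=> a' b' a_s' a_t' b_s' b_t' ab'; apply/negP => /andP [sa bt].
    have ta : adj E a' t.
      case Sa: (single E s t a'); first by move: (Hno _ _ Sa b_s' b_t'); rewrite ab'.
      by move: Sa; rewrite /single a_s' a_t' sa /= adjC; case: (adj E a' t).
    have sb : adj E s b'.
      case Sb: (single E s t b'); first by move: (Hno _ _ Sb a_s' a_t'); rewrite adjC ab'.
      by move: Sb; rewrite /single b_s' b_t' (adjC _ t b') bt /=; case: (adj E s b').
    by move: (noa (a', b')); rewrite /dbl /= a_s' a_t' sa ta b_s' b_t' sb bt ab'.
  apply: (step_u st G c5 Hst xs xt sx ntx ab); try neq2.
  move=> F sub HP; apply: (internal_useless a_s a_t b_s b_t _ _ _ HP).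
  - exact: Na.
  - by apply: Na; rewrite // adjC.
  - exact: subset_trans sub (subsetDl _ _).
have card_contra : forall c, (forall v, dbl v -> v = c) -> False.
  move=> c Hc.
  pose T := [set [set s; t]; [set s; x]; [set s; c]; [set c; t]].
  have Ks : forall v, adj E s v -> [set s; v] \in T.
    move=> v sv; case: (eqVneq v t) => [->|vt]; first by rewrite !inE eqxx.
    case: (eqVneq v s) => [evs|vs]; first by move: (adj_neq G sv); rewrite evs eqxx.
    case Sv: (single E s t v).
      have -> : v = x by move: (nob v); rewrite Sv /= => /negbFE /eqP.
      by rewrite !inE eqxx !orbT.
    have tv : adj E v t.
      by move: Sv; rewrite /single vs vt sv /= adjC; case: (adj E v t).
    have -> : v = c by apply: Hc; rewrite /dbl vs vt sv tv.
    by rewrite !inE eqxx !orbT.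
  have Kt : forall v, adj E v t -> [set v; t] \in T.
    move=> v vt'; case: (eqVneq v s) => [->|vs]; first by rewrite !inE eqxx.
    case: (eqVneq v t) => [evt|vt]; first by move: (adj_neq G vt'); rewrite evt eqxx.
    case Sv: (single E s t v).
      have evx : v = x by move: (nob v); rewrite Sv /= => /negbFE /eqP.
      by move: ntx; rewrite adjC -evx vt'.
    have sv : adj E s v.
      by move: Sv; rewrite /single vs vt (adjC _ t v) vt' /=; case: (adj E s v).
    have -> : v = c by apply: Hc; rewrite /dbl vs vt sv vt'.
    by rewrite !inE eqxx !orbT.
  have sub : E \subset T.
    apply/subsetP => g gE; move: (G g gE) => /eqP /cards2P [u [v [uv eg]]].
    have uvE : adj E u v by rewrite /adj -eg.
    rewrite eg.
    case: (eqVneq u s) => [eus|us]; first by rewrite eus; apply: Ks; rewrite -eus.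
    case: (eqVneq u t) => [eut|ut].
      by rewrite e2C eut; apply: Kt; rewrite adjC -eut.
    case: (eqVneq v s) => [evs|vs].
      by rewrite e2C evs; apply: Ks; rewrite adjC -evs.
    case: (eqVneq v t) => [evt|vt]; first by rewrite evt; apply: Kt; rewrite -evt.
    by move: (noc (u, v)); rewrite /= us ut vs vt uvE.
  have HT : #|E| <= #|T| := subset_leq_card sub.
  by move: (leq_trans c5 (leq_trans HT (card4 _ _ _ _))).
case: (pickP dbl) => [c1 Hc1|nod]; last by exfalso; apply: (card_contra x) => v; rewrite nod.
case: (pickP (fun c => dbl c && (c != c1))) => [c2 /andP [Hc2 c21]|only]; last first.
  exfalso; apply: (card_contra c1) => v Hv.
  by move: (only v); rewrite Hv /= => /negbFE /eqP.
case/and4P: (Hc1) => c1s c1t s1 t1; case/and4P: (Hc2) => c2s c2t s2 t2.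
have n12 : ~~ adj E c1 c2.
  by move: (noa (c1, c2)); rewrite /= /dbl c1s c1t s1 t1 c2s c2t s2 t2 /= => ->.
have c12 : c1 != c2 by rewrite eq_sym.
exact: (step_d st G c5 Hst xs xt sx ntx nx c1s c1t c2s c2t c12 s1 t2 t1 n12).
Qed.


Lemma strict_step E s t : s != t -> gr E -> 5 <= #|E| -> adj E s t -> ~ true_twins E s t ->
  exists E1, [/\ gr E1, #|E1| = #|E|, adj E1 s t & strictly E E1 s t].
Proof.
move=> st G c5 Hst Hnt.
have ts : t != s by rewrite eq_sym.
have Hts : adj E t s by rewrite adjC.
have conv : forall E1, (exists2 E1', E1' = E1 & [/\ gr E1', #|E1'| = #|E|, adj E1' t s & strictly E E1' t s]) ->
    [/\ gr E1, #|E1| = #|E|, adj E1 s t & strictly E E1 s t].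
  move=> E1 [_ -> [G1 C1 A1 S1]]; split => //; first by rewrite adjC.
  exact: strictly_sym.
case: (pickP (fun p : V * V => [&& single E s t p.1, p.2 != s, p.2 != t & adj E p.1 p.2])) =>
    [[x z] /= /and4P [Sx zs zt xz] | noout].
  move: (Sx); rewrite /single => /and3P [xs xt dx].
  case sx: (adj E s x).
    have ntx : ~~ adj E t x by move: dx; rewrite sx; case: (adj E t x).
    have [G1 C1 A1 _ [L S]] := stepA st G Hst xs xt zs zt sx ntx xz.
    exists (swp [set x; z] [set t; x] E); split => //.
    by split => //; exists 2; split => //; apply: leq_trans c5.
  have tx : adj E t x by move: dx; rewrite sx; case: (adj E t x).
  have [G1 C1 A1 _ [L S]] := stepA ts G Hts xt xs zt zs tx (negbT sx) xz.
  exists (swp [set x; z] [set s; x] E); apply: conv; exists (swp [set x; z] [set s; x] E) => //.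
  by split => //; split => //; exists 2; split => //; apply: leq_trans c5.
have Hno : forall y z, single E s t y -> z != s -> z != t -> ~~ adj E y z.
  by move=> y z Sy zs zt; move: (noout (y, z)); rewrite /= Sy zs zt /= => ->.
have [x Sx] := single_exists Hst Hnt.
move: (Sx); rewrite /single => /and3P [xs xt dx].
case sx: (adj E s x).
  have ntx : ~~ adj E t x by move: dx; rewrite sx; case: (adj E t x).
  exact: (strict_noout st G c5 Hst xs xt sx ntx Hno).
have tx : adj E t x by move: dx; rewrite sx; case: (adj E t x).
have Hno' : forall y z, single E t s y -> z != t -> z != s -> ~~ adj E y z.
  by move=> y z; rewrite -single_sym => Sy zt zs; apply: Hno.
have [E1 H1] := strict_noout ts G c5 Hts xt xs tx (negbT sx) Hno'.
by exists E1; apply: conv; exists E1.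
Qed.

Lemma stepM1 E s t : s != t -> gr E -> 5 <= #|E| -> ~~ adj E s t ->
  exists E1, [/\ gr E1, #|E1| = #|E|, adj E1 s t & strictly E E1 s t].
Proof.
move=> st G c5 nst.
have : 0 < #|E| by apply: leq_trans c5.
case/card_gt0P => g gE.
have f2 : #|[set s; t]| = 2 by rewrite cards2 st.
have fE : [set s; t] \notin E := nst.
have [G1 C1] := swp_info G gE fE f2.
have Himp : forall F, F \subset E :\ g -> P3 (g |: F) s t -> P3 ([set s; t] |: F) s t.
  by move=> F _ _; left; rewrite adjU eqxx.
exists (swp g [set s; t] E); split => //.
  by rewrite adj_swp eqxx.
split; first exact: id_move.
exists 1; split; first by apply: leq_trans c5.
have sW : set0 \subset E :\ g by apply: sub0set.
have := id_move_lt st G fE f2 Himp sW; rewrite cards0; apply.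
  by left; rewrite adjU eqxx.
rewrite setU0; move: (G g gE) => /eqP /cards2P [a [b [ab eg]]].
rewrite eg => /(P3_single st) eab.
by move: gE; rewrite eg eab => H; move: nst; rewrite /adj H.
Qed.

End Main.

Theorem lemma8 (n m : nat) : 5 <= n -> 5 <= m ->
  forall (E : {set {set 'I_n}}) (s t : 'I_n),
    is_graph E -> #|E| = m -> s != t -> ~ true_twins E s t ->
    exists (E' : {set {set 'I_n}}) (s' t' : 'I_n),
      [/\ is_graph E', #|E'| = m, s' != t', true_twins E' s' t'
        & stronger 3 m E' s' t' E s t].
Proof.
move=> n5 m5 E s t G Em st Hnt.
have c5 : 5 <= #|E| by rewrite Em.
have Hz : forall x : 'I_n, exists z, [&& z != s, z != t & z != x].
  move=> x; case: (pickP (fun z => [&& z != s, z != t & z != x])) => [z Hz|none].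
    by exists z.
  exfalso.
  have sub : [set: 'I_n] \subset [set s; t; x].
    apply/subsetP => z _; move: (none z); rewrite !inE.
    by case: (z == s); case: (z == t); case: (z == x).
  have := subset_leq_card sub; rewrite cardsT card_ord => Hn.
  have : #|[set s; t; x]| <= 3.
    apply: leq_trans (leq_card_setU _ _).1 _; rewrite cards1 addn1 ltnS.
    by apply: leq_trans (leq_card_setU _ _).1 _; rewrite !cards1.
  by move=> H3; move: (leq_trans n5 (leq_trans Hn H3)).
have [E1 [G1 C1 A1 [L1 [j [Hj Lj]]]]] : exists E1, [/\ gr E1, #|E1| = #|E|, adj E1 s t & strictly E E1 s t].
  case Hst: (adj E s t); first exact: strict_step.
  exact: stepM1 (negbT Hst).
have [E2 [G2 C2 T2 L2]] := iter (leqnn _) st G1 A1 Hz.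
exists E2, s, t; split => //.
  by rewrite C2 C1.
split.
  by move=> i _; apply: leq_trans (L1 i) (L2 i).
exists j; split; first by rewrite -Em.
exact: leq_trans Lj (L2 j).
Qed.
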